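(* Let $(a_i)_{i\ge 1}$ be integers and let $f(x)=\prod_{i=1}^\infty (1+(-x)^i)^{a_i}\in 1+x\,\mathbb Z[[x]]$. Then $f(x)\,f(-x)\,f(x^2)$ is the square of an element of $1+x\,\mathbb Z[[x]]$ if and only if $a_{2i}\equiv 0 \pmod 2$ for all $i\ge 1$.
   Context: $\mathbb Z[[x]]$ denotes formal power series with integer coefficients; the infinite product converges $x$-adically, and $(1+(-x)^i)^{a_i}$ for negative $a_i$ means the inverse power series. *)

(* Defs.v *)
From mathcomp Require Import all_boot all_order all_algebra.
Set Implicit Arguments. Unset Strict Implicit. Unset Printing Implicit Defensive.
Import Order.TTheory GRing.Theory Num.Theory.
Local Open Scope ring_scope.

(* Z[[x]] : f n is the coefficient of x^n *)
Definition fps := nat -> int.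

Definition fone : fps := fun n => if n == 0%N then 1 else 0.

Definition fmul (f g : fps) : fps :=
  fun n => \sum_(k < n.+1) f k * g (n - k)%N.

(* coefficients 0..n of the inverse of f, assuming f 0 = 1:
   g 0 = 1, g m = - sum_{k=1}^{m} f k * g (m-k) *)
Fixpoint finv_seq (f : fps) (n : nat) : seq int :=
  match n with
  | 0 => [:: 1]
  | m.+1 => let s := finv_seq f m in
            rcons s (- \sum_(k < m.+1) f k.+1 * nth 0 s (m - k)%N)
  end.

Definition finv (f : fps) : fps := fun n => nth 0 (finv_seq f n) n.

Definition fpow (f : fps) (a : int) : fps :=
  match a with
  | Posz m => iter m (fmul f) fone
  | Negz m => iter m.+1 (fmul (finv f)) fone
  end.

Definition one_plus_negx_pow (i : nat) : fps :=
  fun n => if n == 0%N then 1 else if n == i then (-1) ^+ i else 0.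

(* f(x) = prod_{i>=1} (1 + (-x)^i)^{a_i}, as an x-adic limit: for i > n the
   i-th factor is 1 mod x^{n+1}, so coefficient n of the infinite product is
   coefficient n of the finite product over 1 <= i <= n. *)
Definition partial_prod (a : nat -> int) (N : nat) : fps :=
  foldr (fun i acc => fmul (fpow (one_plus_negx_pow i) (a i)) acc) fone
        (iota 1 N).

Definition fprod_a (a : nat -> int) : fps := fun n => partial_prod a n n.

(* substitutions x -> -x and x -> x^2 *)
Definition fneg (f : fps) : fps := fun n => (-1) ^+ n * f n.
Definition fsq_arg (f : fps) : fps :=
  fun n => if odd n then 0 else f n./2.

Definition is_square_1x (h : fps) : Prop :=
  exists g : fps, g 0%N = 1 /\ forall n, fmul g g n = h n.

(* Main.v *)
Require Import Defs.
From mathcomp Require Import all_boot all_order all_algebra.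
Import Order.TTheory GRing.Theory Num.Theory.
Local Open Scope ring_scope.
From mathcomp Require Import zify ring.
From Stdlib Require Import FunctionalExtensionality.
Set Implicit Arguments. Unset Strict Implicit. Unset Printing Implicit Defensive.
Local Notation finv := Defs.finv.

Lemma fps_ext (f g : fps) : (forall n, f n = g n) -> f = g.
Proof. move=> H; exact: functional_extensionality. Qed.

Lemma fmul_rev f g i : fmul f g i = \sum_(j < i.+1) f (i - j)%N * g j.
Proof.
rewrite /fmul (reindex_inj rev_ord_inj) /=.
by apply: eq_bigr => j _; rewrite (sub_ordK j).
Qed.

Lemma fmulC : commutative fmul.
Proof.
move=> f g; apply: fps_ext => i; rewrite fmul_rev /fmul.
by apply: eq_bigr => j _; rewrite mulrC.
Qed.

Lemma fmulA : associative fmul.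
Proof.
move=> p q r; apply: fps_ext => i; rewrite {1}/fmul fmul_rev.
pose coef3 j k := p j * (q (i - j - k)%N * r k).
transitivity (\sum_(j < i.+1) \sum_(k < i.+1 | (k <= i - j)%N) coef3 j k).
  apply: eq_bigr => /= j _; rewrite fmul_rev big_distrr /=.
  by rewrite (big_ord_narrow_leq (leq_subr _ _)).
rewrite (exchange_big_dep predT) //=; apply: eq_bigr => k _.
transitivity (\sum_(j < i.+1 | (j <= i - k)%N) coef3 j k).
  apply: eq_bigl => j; rewrite -ltnS -(ltnS j) -!subSn ?leq_ord //.
  by rewrite -subn_gt0 -(subn_gt0 j) -!subnDA addnC.
rewrite (big_ord_narrow_leq (leq_subr _ _)) /fmul big_distrl /=.
by apply: eq_bigr => j _; rewrite /coef3 -!subnDA addnC mulrA.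
Qed.

Lemma fmul1f : left_id fone fmul.
Proof.
move=> f; apply: fps_ext => i; rewrite /fmul big_ord_recl subn0 /fone /= mul1r.
by rewrite big1 ?addr0 // => j _; rewrite mul0r.
Qed.

Lemma fmulf1 : right_id fone fmul.
Proof. by move=> f; rewrite fmulC fmul1f. Qed.

Lemma fmulCA f g h : fmul f (fmul g h) = fmul g (fmul f h).
Proof. by rewrite !fmulA (fmulC f). Qed.

Definition feq (N : nat) (f g : fps) := forall n, (n <= N)%N -> f n = g n.

Lemma feq_refl N f : feq N f f. Proof. by []. Qed.
Lemma feq_sym N f g : feq N f g -> feq N g f. Proof. by move=> H n Hn; rewrite H. Qed.
Lemma feq_trans N f g h : feq N f g -> feq N g h -> feq N f h.
Proof. by move=> H1 H2 n Hn; rewrite H1 ?H2. Qed.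
Lemma feq_le N M f g : (M <= N)%N -> feq N f g -> feq M f g.
Proof. by move=> HM H n Hn; rewrite H // (leq_trans Hn HM). Qed.

Lemma feq_mul N f f' g g' : feq N f f' -> feq N g g' -> feq N (fmul f g) (fmul f' g').
Proof.
move=> H1 H2 n Hn; rewrite /fmul; apply: eq_bigr => k _.
have Hk : (k <= N)%N by apply: leq_trans Hn; rewrite -ltnS.
by rewrite H1 // H2 // (leq_trans (leq_subr _ _) Hn).
Qed.

Lemma size_finv_seq f n : size (finv_seq f n) = n.+1.
Proof. by elim: n => //= n IH; rewrite size_rcons IH. Qed.

Lemma nth_finv_seq f n k : (k <= n)%N -> nth 0 (finv_seq f n) k = finv f k.
Proof.
elim: n k => [|n IH] k Hk; first by move: Hk; rewrite leqn0 => /eqP ->.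
rewrite leq_eqVlt in Hk; case/orP: Hk => [/eqP -> //|Hk].
by rewrite /= nth_rcons size_finv_seq Hk IH.
Qed.

Lemma finv0 f : finv f 0 = 1. Proof. by []. Qed.

Lemma finvS f m : finv f m.+1 = - \sum_(k < m.+1) f k.+1 * finv f (m - k)%N.
Proof.
rewrite {1}/finv /= nth_rcons size_finv_seq ltnn eqxx; congr (- _).
by apply: eq_bigr => k _; rewrite nth_finv_seq // leq_subr.
Qed.

Lemma fmul_finv f : f 0%N = 1 -> fmul f (finv f) = fone.
Proof.
move=> f0; apply: fps_ext => -[|m]; first by rewrite /fmul big_ord1 f0 mul1r.
rewrite /fmul big_ord_recl f0 mul1r subn0 finvS /fone /=.
by rewrite addrC; apply/eqP; rewrite subr_eq0; apply/eqP; apply: eq_bigr.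
Qed.

Lemma fmul_const0 f g : fmul f g 0%N = f 0%N * g 0%N.
Proof. by rewrite /fmul big_ord1. Qed.

Lemma finv_unique f g : f 0%N = 1 -> fmul f g = fone -> g = finv f.
Proof.
move=> f0 H.
by rewrite -(fmul1f g) -(fmul_finv f0) fmulC fmulA (fmulC g) H fmul1f.
Qed.

Lemma finv_mul f g : f 0%N = 1 -> g 0%N = 1 ->
  finv (fmul f g) = fmul (finv f) (finv g).
Proof.
move=> f0 g0; symmetry; apply: finv_unique; first by rewrite fmul_const0 f0 g0 mulr1.
rewrite fmulA (fmulC f g) -(fmulA g) fmul_finv // fmulf1 fmul_finv //.
Qed.

Lemma finv_one : finv fone = fone.
Proof. by symmetry; apply: finv_unique => //; rewrite fmulf1. Qed.

Definition fexp f m := iter m (fmul f) fone.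

Lemma fexp0 f : fexp f 0 = fone. Proof. by []. Qed.
Lemma fexpS f m : fexp f m.+1 = fmul f (fexp f m). Proof. by []. Qed.

Lemma fexpD f m n : fexp f (m + n) = fmul (fexp f m) (fexp f n).
Proof. by elim: m => [|m IH]; rewrite ?fmul1f // addSn fexpS IH fmulA. Qed.

Lemma fexp_mul f g m : fexp (fmul f g) m = fmul (fexp f m) (fexp g m).
Proof.
elim: m => [|m IH]; first by rewrite fmulf1.
rewrite !fexpS IH -!fmulA; congr (fmul f _); exact: fmulCA.
Qed.

Lemma fexp_one m : fexp fone m = fone.
Proof. by elim: m => // m IH; rewrite fexpS IH fmulf1. Qed.

Lemma fexp_const0 f m : f 0%N = 1 -> fexp f m 0%N = 1.
Proof. by move=> f0; elim: m => // m IH; rewrite fexpS fmul_const0 f0 IH mulr1. Qed.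

Lemma finv_const0 f : finv f 0%N = 1. Proof. by []. Qed.

Lemma fpowE f a : fpow f a = if (0 <= a) then fexp f `|a|%N else fexp (finv f) `|a|%N.
Proof. by case: a. Qed.

Lemma fpow_const0 f a : f 0%N = 1 -> fpow f a 0%N = 1.
Proof. by move=> f0; case: a => m; [exact: (fexp_const0 m f0)|exact: (fexp_const0 m.+1 (finv_const0 f))]. Qed.

Lemma fpow_mul f g a : f 0%N = 1 -> g 0%N = 1 ->
  fpow (fmul f g) a = fmul (fpow f a) (fpow g a).
Proof.
move=> f0 g0; case: a => m; first exact: fexp_mul.
rewrite /fpow finv_mul //; exact: (fexp_mul (finv f) (finv g) m.+1).
Qed.

Lemma fexp_cancel f m n : f 0%N = 1 ->
  fmul (fexp f m) (fexp (finv f) n) =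
  if (n <= m)%N then fexp f (m - n) else fexp (finv f) (n - m).
Proof.
move=> f0; elim: n m => [|n IH] m; first by rewrite fmulf1 subn0.
case: m => [|m]; first by rewrite fmul1f.
rewrite !fexpS -fmulA (fmulCA (fexp f m)) fmulA fmul_finv // fmul1f.
by rewrite IH ltnS !subSS.
Qed.

Lemma fpow_add f a b : f 0%N = 1 -> fpow f (a + b) = fmul (fpow f a) (fpow f b).
Proof.
move=> f0.
have key : forall m n, fpow f (Posz m + Negz n) = fmul (fpow f (Posz m)) (fpow f (Negz n)).
  move=> m n; rewrite [RHS](fexp_cancel m n.+1 f0).
  case: (leqP n.+1 m) => H.
    have -> : Posz m + Negz n = Posz (m - n.+1) by move: H; rewrite NegzE; lia.
    by [].
  have -> : Posz m + Negz n = Negz (n - m) by rewrite !NegzE; lia.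
  by rewrite subSn // -ltnS.
case: a => m; case: b => n.
- by rewrite -PoszD; exact: fexpD.
- exact: key.
- by rewrite addrC key fmulC.
- have -> : Negz m + Negz n = Negz (m+n).+1 by rewrite !NegzE; lia.
  rewrite /fpow -/(fexp _ _).
  have := fexpD (finv f) m.+1 n.+1; rewrite addSn addnS; exact.
Qed.

Section Morph.
Variable mu : fps -> fps.
Hypothesis mu_mul : forall f g, mu (fmul f g) = fmul (mu f) (mu g).
Hypothesis mu_one : mu fone = fone.
Hypothesis mu_0 : forall f, mu f 0%N = f 0%N.

Lemma mu_inv f : f 0%N = 1 -> mu (finv f) = finv (mu f).
Proof.
move=> f0; apply: finv_unique; first by rewrite mu_0.
by rewrite -mu_mul fmul_finv.
Qed.

Lemma mu_exp f m : mu (fexp f m) = fexp (mu f) m.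
Proof. by elim: m => // m IH; rewrite !fexpS mu_mul IH. Qed.

Lemma mu_pow f a : f 0%N = 1 -> mu (fpow f a) = fpow (mu f) a.
Proof.
move=> f0; case: a => m; first exact: mu_exp.
rewrite /fpow -!/(fexp _ _).
have := mu_exp (finv f) m.+1; rewrite mu_inv //; exact.
Qed.
End Morph.

Lemma fneg_mul f g : fneg (fmul f g) = fmul (fneg f) (fneg g).
Proof.
apply: fps_ext => n; rewrite /fneg /fmul mulr_sumr; apply: eq_bigr => k _.
have Hk : (k <= n)%N by rewrite -ltnS.
rewrite -{1}(subnKC Hk) exprD; ring.
Qed.

Lemma fneg_one : fneg fone = fone.
Proof. by apply: fps_ext => -[|n]; rewrite /fneg /fone /= ?mulr0 ?mulr1. Qed.

Lemma fneg_0 f : fneg f 0%N = f 0%N.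
Proof. by rewrite /fneg expr0 mul1r. Qed.

Lemma sum_even (F : nat -> int) m : (forall k, odd k -> F k = 0) ->
  \sum_(k < (m.*2).+1) F k = \sum_(j < m.+1) F (j.*2).
Proof.
move=> HF; elim: m => [|m IH]; first by rewrite !big_ord1.
rewrite doubleS big_ord_recr /= big_ord_recr /= IH [RHS]big_ord_recr /=.
by rewrite (HF (m.*2).+1) /= ?odd_double // addr0.
Qed.

Lemma fsq_mul f g : fsq_arg (fmul f g) = fmul (fsq_arg f) (fsq_arg g).
Proof.
apply: fps_ext => n; rewrite /fsq_arg /fmul.
case: ifP => Hn.
  symmetry; apply: big1 => k _.
  have Hk : (k <= n)%N by rewrite -ltnS.
  move: Hn; rewrite -{1}(subnKC Hk) oddD.
  case: (odd k) => /=; first by rewrite mul0r.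
  by move=> ->; rewrite mulr0.
move: (odd_double_half n); rewrite Hn add0n; move: (n./2) => m <-.
rewrite (@sum_even (fun k => (if odd k then 0 else f k./2) * (if odd (m.*2 - k) then 0 else g (m.*2 - k)./2))); last first.
  by move=> k ->; rewrite mul0r.
apply: eq_bigr => j _.
have Hj : (j <= m)%N by rewrite -ltnS.
by rewrite odd_double doubleK -doubleB odd_double doubleK.
Qed.

Lemma fsq_one : fsq_arg fone = fone.
Proof.
apply: fps_ext => n; rewrite /fsq_arg /fone.
case: n => [|n] //=; case: ifP => // Hn; case: ifP => // /eqP H; lia.
Qed.

Lemma fsq_0 f : fsq_arg f 0%N = f 0%N.
Proof. by []. Qed.

Definition fneg_pow := mu_pow fneg_mul fneg_one fneg_0.
Definition fsq_pow := mu_pow fsq_mul fsq_one fsq_0.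

Lemma feq_fneg N f g : feq N f g -> feq N (fneg f) (fneg g).
Proof. by move=> H n Hn; rewrite /fneg H. Qed.

Lemma feq_fsq N f g : feq N f g -> feq N (fsq_arg f) (fsq_arg g).
Proof. by move=> H n Hn; rewrite /fsq_arg H //; lia. Qed.

Lemma feq_exp N f g m : feq N f g -> feq N (fexp f m) (fexp g m).
Proof. by move=> H; elim: m => // m IH; rewrite !fexpS; apply: feq_mul. Qed.

Lemma feq_inv N f g : f 0%N = 1 -> g 0%N = 1 -> feq N f g -> feq N (finv f) (finv g).
Proof.
move=> f0 g0 H.
rewrite -(fmulf1 (finv f)) -(fmul_finv g0) fmulA.
apply: feq_trans (_ : feq N _ (fmul (fmul (finv f) f) (finv g))) _.
  apply: feq_mul => //; apply: feq_mul => //; exact: feq_sym.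
by rewrite fmulC (fmulC _ f) fmul_finv // fmulf1.
Qed.

Lemma feq_pow N f g a : f 0%N = 1 -> g 0%N = 1 -> feq N f g -> feq N (fpow f a) (fpow g a).
Proof.
move=> f0 g0 H; case: a => m; first exact: feq_exp.
exact: (feq_exp m.+1 (feq_inv f0 g0 H)).
Qed.

Lemma feq_const0 N f : feq N f fone -> f 0%N = 1.
Proof. by move=> H; rewrite H. Qed.

Definition bprods (phi : nat -> fps) (s : seq nat) : fps :=
  foldr (fun i acc => fmul (phi i) acc) fone s.

Lemma bprods_cat phi s1 s2 : bprods phi (s1 ++ s2) = fmul (bprods phi s1) (bprods phi s2).
Proof. by elim: s1 => [|i s IH] /=; rewrite ?fmul1f // IH fmulA. Qed.

Lemma bprods_small N phi s : (forall i, i \in s -> feq N (phi i) fone) ->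
  feq N (bprods phi s) fone.
Proof.
elim: s => [|i s IH] H //=; rewrite -(fmulf1 fone); apply: feq_mul.
  by apply: H; rewrite inE eqxx.
by apply: IH => j Hj; apply: H; rewrite inE Hj orbT.
Qed.

Lemma bprods_mul phi psi s :
  bprods (fun i => fmul (phi i) (psi i)) s = fmul (bprods phi s) (bprods psi s).
Proof.
elim: s => [|i s IH] /=; first by rewrite fmulf1.
by rewrite IH -!fmulA (fmulCA (psi i)).
Qed.

Lemma bprods_ext phi psi s : (forall i, i \in s -> phi i = psi i) -> bprods phi s = bprods psi s.
Proof.
elim: s => [|i s IH] H //=; rewrite H ?inE ?eqxx // IH // => j Hj.
by apply: H; rewrite inE Hj orbT.
Qed.

Lemma bprods_const0 phi s : (forall i, phi i 0%N = 1) -> bprods phi s 0%N = 1.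
Proof. by move=> H; elim: s => //= i s IH; rewrite fmul_const0 H IH mulr1. Qed.

Section MorphB.
Variable mu : fps -> fps.
Hypothesis mu_mul : forall f g, mu (fmul f g) = fmul (mu f) (mu g).
Hypothesis mu_one : mu fone = fone.
Lemma mu_bprods phi s : mu (bprods phi s) = bprods (fun i => mu (phi i)) s.
Proof. by elim: s => //= i s IH; rewrite mu_mul IH. Qed.
End MorphB.

Definition flim (phi : nat -> fps) : fps := fun n => bprods phi (iota 1 n) n.

Lemma feq_flim phi N : (forall i n, (n < i)%N -> phi i n = fone n) ->
  feq N (flim phi) (bprods phi (iota 1 N)).
Proof.
move=> Hphi n Hn; rewrite /flim.
rewrite -(subnKC Hn) iotaD bprods_cat.
have H2 : feq n (bprods phi (iota (1 + n) (N - n))) fone.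
  apply: bprods_small => i.
  rewrite mem_iota => /andP [Hi _] k Hk; apply: Hphi; lia.
by rewrite (feq_mul (@feq_refl n _) H2 (leqnn n)) fmulf1.
Qed.

Definition fadd (f g : fps) : fps := fun n => f n + g n.
Definition mono (c : int) (i : nat) : fps := fun n => if n == i then c else 0.

Lemma fmul_addl f g h : fmul (fadd f g) h = fadd (fmul f h) (fmul g h).
Proof.
apply: fps_ext => n; rewrite /fadd /fmul -big_split /=.
by apply: eq_bigr => k _; rewrite mulrDl.
Qed.

Lemma fmul_mono c i h n : fmul (mono c i) h n = if (i <= n)%N then c * h (n - i)%N else 0.
Proof.
rewrite /fmul /mono; case: ifP => Hi.
  have Hi' : (i < n.+1)%N by [].
  rewrite (bigD1 (Ordinal Hi')) //= eqxx big1 ?addr0 // => k Hk.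
  case: ifP => [/eqP Hki|]; last by rewrite mul0r.
  by move: Hk; rewrite -val_eqE /= Hki eqxx.
apply: big1 => k _; case: ifP => [/eqP Hki|]; last by rewrite mul0r.
have := ltn_ord k; rewrite Hki ltnS Hi //.
Qed.

Lemma e_decomp i : (0 < i)%N ->
  one_plus_negx_pow i = fadd fone (mono ((-1) ^+ i) i).
Proof.
move=> Hi; apply: fps_ext => n; rewrite /one_plus_negx_pow /fadd /fone /mono.
case: ifP => [/eqP ->|_]; last by rewrite add0r.
by have -> : (0 == i) = false by lia.
Qed.

Lemma e_small i n : (n < i)%N -> one_plus_negx_pow i n = fone n.
Proof.
move=> H; rewrite /one_plus_negx_pow /fone; case: ifP => // _.
by have -> : (n == i) = false by lia.
Qed.

Lemma e_0 i : one_plus_negx_pow i 0%N = 1. Proof. by []. Qed.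

Lemma fneg_e_even i : ~~ odd i -> fneg (one_plus_negx_pow i) = one_plus_negx_pow i.
Proof.
move=> Hi; apply: fps_ext => n; rewrite /fneg /one_plus_negx_pow.
case: ifP => [/eqP ->|_]; first by rewrite mul1r.
case: ifP => [/eqP ->|_]; last by rewrite mulr0.
by rewrite -signr_odd (negbTE Hi) mul1r.
Qed.

Lemma fsq_e i n : fsq_arg (one_plus_negx_pow i) n =
  if n == 0%N then 1 else if n == (i.*2)%N then (-1) ^+ i else 0.
Proof.
rewrite /fsq_arg /one_plus_negx_pow.
case: (boolP (odd n)) => Hn.
  have -> : (n == 0%N) = false by lia.
  by have -> : (n == i.*2) = false by lia.
have -> : (n./2 == 0%N) = (n == 0%N) by lia.
by have -> : (n./2 == i) = (n == i.*2) by lia.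
Qed.

Lemma fsq_e_small i n : (0 < i)%N -> (n < i.*2)%N ->
  fsq_arg (one_plus_negx_pow i) n = fone n.
Proof.
move=> Hi H; rewrite fsq_e /fone; case: ifP => // _.
by have -> : (n == i.*2) = false by lia.
Qed.

Lemma e_odd i : odd i ->
  fmul (one_plus_negx_pow i) (fneg (one_plus_negx_pow i)) = fsq_arg (one_plus_negx_pow i).
Proof.
move=> Hi.
have Hi0 : (0 < i)%N by lia.
have Hs : (-1) ^+ i = -1 :> int by rewrite -signr_odd Hi.
have Hneg : fneg (one_plus_negx_pow i) = fadd fone (mono 1 i).
  apply: fps_ext => n; rewrite /fneg /one_plus_negx_pow /fadd /fone /mono.
  case: ifP => [/eqP ->|_]; first by have -> : (0 == i) = false by lia; rewrite mul1r addr0.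
  case: ifP => [/eqP ->|_]; last by rewrite mulr0 add0r.
  by rewrite Hs add0r; ring.
apply: fps_ext => n.
rewrite Hneg {1}(e_decomp Hi0) fmul_addl /fadd fmul1f fmul_mono fsq_e Hs /fone /mono.
repeat case: ifP => ? //; try lia.
Qed.

Lemma fpow_one a : fpow fone a = fone.
Proof. case: a => m; first exact: fexp_one. by rewrite /fpow finv_one; exact: (fexp_one m.+1). Qed.

Lemma small_pow K f a : feq K f fone -> feq K (fpow f a) fone.
Proof.
move=> H; rewrite -(fpow_one a); apply: feq_pow => //; exact: feq_const0 H.
Qed.

Lemma small_mul K f g : feq K f fone -> feq K g fone -> feq K (fmul f g) fone.
Proof. by move=> H1 H2; rewrite -(fmulf1 fone); apply: feq_mul. Qed.

Lemma fpow1 f : fpow f 1 = f.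
Proof. exact: fmulf1. Qed.

Lemma fpow0 f : fpow f 0 = fone.
Proof. by []. Qed.

Lemma bprods_one s : bprods (fun _ => fone) s = fone.
Proof. by elim: s => //= i s ->; rewrite fmulf1. Qed.

Lemma e_feq i : (0 < i)%N -> feq i.-1 (one_plus_negx_pow i) fone.
Proof. by move=> Hi n Hn; apply: e_small; lia. Qed.

Lemma fsq_e_feq i : (0 < i)%N -> feq (i.*2).-1 (fsq_arg (one_plus_negx_pow i)) fone.
Proof. by move=> Hi n Hn; apply: fsq_e_small => //; lia. Qed.

Lemma fmul_AC f g h k : fmul (fmul f g) (fmul h k) = fmul (fmul f h) (fmul g k).
Proof. by rewrite -!fmulA (fmulCA g). Qed.

Lemma sq_low u d : u 0%N = 1 -> (forall j, (0 < j)%N -> (j < d.+1)%N -> u j = 0) ->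
  fmul u u d.+1 = u d.+1 + u d.+1.
Proof.
move=> u0 H; rewrite /fmul big_ord_recl /= u0 mul1r subn0; congr (_ + _).
rewrite big_ord_recr /= subnn u0 mulr1 big1 ?add0r // => k _.
by rewrite /bump /= (H k.+1) ?mul0r //; have := ltn_ord k; lia.
Qed.

Lemma no_sqrt N u : (0 < N)%N -> u 0%N = 1 ->
  feq N (fmul u u) (fun n => if n == 0%N then 1 else if n == N then 1 else 0) -> False.
Proof.
move=> HN u0 H.
have P : forall d, (d < N)%N -> forall j, (0 < j)%N -> (j <= d)%N -> u j = 0.
  elim=> [|d IH] Hd j Hj Hjd; first by lia.
  rewrite leq_eqVlt in Hjd; case/orP: Hjd => [/eqP ->|Hjd]; last first.
    by apply: IH => //; lia.
  have := H d.+1 (ltnW Hd); rewrite (sq_low u0) => [|k Hk Hk']; last first.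
    by apply: IH => //; lia.
  have -> : (d.+1 == N) = false by lia.
  by move=> /= E; lia.
case: N HN H P => // N _ H P.
have := H N.+1 (leqnn _); rewrite (sq_low u0) => [|k Hk Hk']; last first.
  by apply: (P N) => //; lia.
by rewrite eqxx /= => E; lia.
Qed.

Section Main.
Variable a : nat -> int.
Local Notation e := one_plus_negx_pow.
Definition phi i := fpow (e i) (a i).
Definition psi i := if odd i then fpow (fsq_arg (e i)) (a i)
  else fmul (fpow (e i) (a i)) (fpow (fsq_arg (e i)) (a i %/ 2)%Z).
Definition rho i := if odd i then fone else fpow (fsq_arg (e i)) (a i %% 2)%Z.

Lemma factor_id i : fmul (fmul (phi i) (fneg (phi i))) (fsq_arg (phi i)) =
  fmul (fmul (psi i) (psi i)) (rho i).
Proof.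
rewrite /phi fneg_pow ?e_0 // fsq_pow ?e_0 // /psi /rho.
case: ifP => Hi.
  by rewrite -fpow_mul ?fneg_0 ?e_0 // e_odd // fmulf1.
rewrite fneg_e_even ?Hi //.
have Ha : a i = ((a i %/ 2)%Z + (a i %/ 2)%Z) + (a i %% 2)%Z by lia.
have HS : fpow (fsq_arg (e i)) (a i) = fmul (fmul (fpow (fsq_arg (e i)) (a i %/ 2)%Z)
    (fpow (fsq_arg (e i)) (a i %/ 2)%Z)) (fpow (fsq_arg (e i)) (a i %% 2)%Z).
  by rewrite {1}Ha !fpow_add ?fsq_0 ?e_0.
by rewrite HS fmulA fmul_AC.
Qed.

Lemma phi_small i n : (n < i)%N -> phi i n = fone n.
Proof.
move=> Hn; have Hi : (0 < i)%N by lia.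
by apply: (small_pow _ (e_feq Hi)); lia.
Qed.

Lemma psi_small i n : (n < i)%N -> psi i n = fone n.
Proof.
move=> Hn; have Hi : (0 < i)%N by lia.
have H2 : feq i.-1 (fsq_arg (e i)) fone.
  by apply: feq_le (fsq_e_feq Hi); lia.
rewrite /psi; case: ifP => _.
  by apply: (small_pow _ H2); lia.
by apply: (small_mul (small_pow _ (e_feq Hi)) (small_pow _ H2)); lia.
Qed.

Definition G := fmul (fmul (fprod_a a) (fneg (fprod_a a))) (fsq_arg (fprod_a a)).

Lemma G_feq N : feq N G (fmul (fmul (bprods psi (iota 1 N)) (bprods psi (iota 1 N)))
                              (bprods rho (iota 1 N))).
Proof.
have HF : feq N (fprod_a a) (bprods phi (iota 1 N)) := feq_flim (N:=N) phi_small.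
apply: feq_trans (feq_mul (feq_mul HF (feq_fneg HF)) (feq_fsq HF)) _.
rewrite (mu_bprods fneg_mul fneg_one) (mu_bprods fsq_mul fsq_one) -!bprods_mul.
rewrite (@bprods_ext _ (fun i => fmul (fmul (psi i) (psi i)) (rho i))) => [|i _].
  by rewrite !bprods_mul.
exact: factor_id.
Qed.

Lemma dir_if : (forall i : nat, (1 <= i)%N -> (2 %| a (2 * i)%N)%Z) -> is_square_1x G.
Proof.
move=> H; exists (flim psi); split => // n.
have Hg := feq_flim (N:=n) psi_small.
rewrite (feq_mul Hg Hg (leqnn n)) (G_feq (leqnn n)).
rewrite (@bprods_ext rho (fun _ => fone)) ?bprods_one ?fmulf1 //.
move=> i; rewrite mem_iota => /andP [Hi _]; rewrite /rho; case: ifP => // /negbT Hodd.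
have Hi2 : i = (2 * i./2)%N by lia.
have Hi1 : (1 <= i./2)%N by lia.
have := H _ Hi1.
by rewrite -Hi2 => Hd; have -> : (a i %% 2)%Z = 0 by lia.
Qed.

Lemma core m : (1 <= m)%N -> (forall j, (1 <= j)%N -> (j < m)%N -> (2 %| a (2 * j)%N)%Z) ->
  ~~ (2 %| a (2 * m)%N)%Z -> is_square_1x G -> False.
Proof.
move=> Hm Hlow Hodd [g [g0 Hg]].
set N := ((2 * m).*2)%N.
set Psi := bprods psi (iota 1 N).
set R := bprods rho (iota 1 N).
set h := fsq_arg (e (2 * m)).
have HR : feq N R h.
  have Hs : iota 1 N = iota 1 (2 * m).-1 ++ (2 * m)%N :: iota (2 * m).+1 (N - 2 * m).
    rewrite -[in LHS](subnKC (_ : ((2 * m).-1 <= N)%N)); last by rewrite /N; lia.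
    rewrite iotaD.
    have -> : (N - (2 * m).-1 = (N - 2 * m).+1)%N by rewrite /N; lia.
    by have -> : (1 + (2 * m).-1 = 2 * m)%N by lia.
  rewrite /R Hs bprods_cat /=.
  have -> : rho (2 * m) = h.
    rewrite /rho oddM /= (_ : (a (2 * m) %% 2)%Z = 1); last by lia.
    exact: fpow1.
  apply: (@feq_trans _ _ (fmul fone (fmul h fone))); last by rewrite fmul1f fmulf1; exact: feq_refl.
  apply: feq_mul.
    apply: bprods_small => i; rewrite mem_iota => /andP [Hi1 Hi2].
    rewrite /rho; case: ifP => // /negbT Hodd'.
    have Hi : i = (2 * i./2)%N by lia.
    have Hj1 : (1 <= i./2)%N by lia.
    have Hj2 : (i./2 < m)%N by lia.
    have := Hlow _ Hj1 Hj2.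
    by rewrite -Hi => Hd; rewrite (_ : (a i %% 2)%Z = 0); last by lia.
  apply: feq_mul; first exact: feq_refl.
  apply: bprods_small => i; rewrite mem_iota => /andP [Hi1 Hi2].
  rewrite /rho; case: ifP => // _.
  apply: small_pow; apply: feq_le (fsq_e_feq _); rewrite /N; lia.
have Psi0 : Psi 0%N = 1.
  have : feq 0 Psi fone.
    apply: bprods_small => i; rewrite mem_iota => /andP [Hi1 _] n Hn.
    apply: psi_small; lia.
  by move=> H; rewrite H.
have Gg : fmul g g = G by apply: fps_ext.
apply: (@no_sqrt N (fmul g (finv Psi))).
- by rewrite /N; lia.
- by rewrite fmul_const0 g0 finv_const0 mulr1.
have E1 : feq N (fmul (fmul g g) (fmul (finv Psi) (finv Psi)))
                (fmul (fmul (fmul Psi Psi) h) (fmul (finv Psi) (finv Psi))).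
  apply: feq_mul; last exact: feq_refl.
  rewrite Gg; apply: feq_trans (@G_feq N) _.
  apply: feq_mul; [exact: feq_refl | exact: HR].
rewrite fmul_AC; apply: feq_trans E1 _.
rewrite (fmulC (fmul Psi Psi) h) -fmulA fmul_AC fmul_finv // !fmulf1.
move=> n _; rewrite /h fsq_e.
by rewrite -signr_odd oddM /= expr0.
Qed.

Lemma dir_only : is_square_1x G -> (forall i : nat, (1 <= i)%N -> (2 %| a (2 * i)%N)%Z).
Proof.
move=> Hsq.
suff : forall M i, (i < M)%N -> (1 <= i)%N -> (2 %| a (2 * i)%N)%Z.
  by move=> H i; apply: (H i.+1).
elim=> [|M IH] i Hi Hi1; first by [].
rewrite ltnS leq_eqVlt in Hi; case/orP: Hi => [/eqP Ei|Hi]; last exact: IH.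
subst i; apply/negPn/negP => Hodd.
by apply: (core Hi1 _ Hodd Hsq) => j Hj1 Hj2; apply: IH.
Qed.
End Main.

Unset Implicit Arguments.
Theorem theorem4p1 (a : nat -> int) :
  is_square_1x (fmul (fmul (fprod_a a) (fneg (fprod_a a))) (fsq_arg (fprod_a a)))
  <-> (forall i : nat, (1 <= i)%N -> (2 %| a (2 * i)%N)%Z).
Proof. split; [exact: dir_only | exact: dir_if]. Qed.
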